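(* Let $G$ be a simple graph and let $t:=\max\{\Delta(G),M(G)\}$, where $\Delta(G)$ is the maximum degree and $M(G)$ the size of a maximum matching of $G$. If $t\geq 6$, then $\operatorname{ex}(G,P_1\cup P_2)=t$.
   Context: $P_1\cup P_2$ is the vertex-disjoint union of a single edge and a path with two edges. $\operatorname{ex}(G,H)$ is the maximum number of edges of a subgraph of $G$ containing no copy of $H$. *)

(* Defs.v *)
(* A simple graph is a symmetric irreflexive relation on a finType. *)
From mathcomp Require Import all_boot.
Set Implicit Arguments. Unset Strict Implicit. Unset Printing Implicit Defensive.

Section Graphs.
Variables (V : finType) (adj : rel V).

Definition edges : {set {set V}} :=
  [set [set x; y] | x in V, y in V & adj x y].

Definition deg (x : V) : nat := #|[set y | adj x y]|.

(* maximum degree Delta(G) (0 on the empty vertex set) *)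
Definition maxdeg : nat := \max_(x : V) deg x.

Definition is_matching (M : {set {set V}}) : bool :=
  (M \subset edges) &&
  [forall e1 in M, forall e2 in M, (e1 != e2) ==> [disjoint e1 & e2]].

Definition matching_number : nat :=
  \max_(M : {set {set V}} | is_matching M) #|M|.

End Graphs.

(* F (a set of edges) contains a copy of P1 u P2: five distinct vertices
   a,b,c,d,f with edges ab, cd, df (a disjoint edge and a path with two edges) *)
Definition has_P1uP2 (V : finType) (F : {set {set V}}) : bool :=
  [exists a : V, exists b : V, exists c : V, exists d : V, exists f : V,
     uniq [:: a; b; c; d; f] &&
     [&& [set a; b] \in F, [set c; d] \in F & [set d; f] \in F]].

Definition ex_P1uP2 (V : finType) (adj : rel V) : nat :=
  \max_(F : {set {set V}} | (F \subset edges adj) && ~~ has_P1uP2 F) #|F|.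

(* Main.v *)
Require Import Defs.
From mathcomp Require Import all_boot.
From mathcomp Require Import zify.

Section Aux.
Variables (V : finType) (adj : rel V).
Hypothesis (hs : symmetric adj) (hi : irreflexive adj).

Lemma mem_edges x y : adj x y -> [set x; y] \in edges adj.
Proof. move=> h; apply/imset2P; exists x y; rewrite ?inE ?h //. Qed.

Lemma edgesP {e} : e \in edges adj -> exists x y, adj x y /\ e = [set x; y].
Proof. by case/imset2P=> x y _; rewrite inE => /andP[_ h] ->; exists x, y. Qed.

Lemma pair_inj (v u u' : V) : [set v; u] = [set v; u'] -> u = u'.
Proof.
move=> E.
have h1 : u \in [set v; u'] by rewrite -E !inE eqxx orbT.
have h2 : u' \in [set v; u] by rewrite E !inE eqxx orbT.
move: h1 h2; rewrite !inE => /orP[/eqP->|/eqP->//] /orP[/eqP->//|/eqP->//].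
Qed.

Lemma pair_adj (d u : V) : [set d; u] \in edges adj -> adj d u.
Proof.
case/edgesP=> x [y [hxy E]].
have hd : d \in [set x; y] by rewrite -E !inE eqxx.
have hu : u \in [set x; y] by rewrite -E !inE eqxx orbT.
have hx : x \in [set d; u] by rewrite E !inE eqxx.
have hy : y \in [set d; u] by rewrite E !inE eqxx orbT.
have nxy : x != y by apply/eqP => e; move: hxy; rewrite e hi.
move: hd hu hx hy; rewrite !inE.
case/orP=>/eqP ->; case/orP=>/eqP ->; rewrite //.
all: try by rewrite hs.
- by move=> _; rewrite orbb eq_sym (negbTE nxy).
- by rewrite orbb (negbTE nxy).
Qed.

Lemma pairP {F : {set {set V}}} {e} {v : V} : F \subset edges adj -> e \in F -> v \in e ->
  exists u, [/\ adj v u, u != v & e = [set v; u]].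
Proof.
move=> sF eF ve; case/edgesP: (subsetP sF _ eF) => x [y [hxy E]].
have nxy : x != y by apply/eqP => e'; move: hxy; rewrite e' hi.
move: ve; rewrite E !inE => /orP[]/eqP ->.
  by exists y; split => //; rewrite eq_sym.
by exists x; split; [rewrite hs | done | rewrite setUC].
Qed.

Definition nb (F : {set {set V}}) v := [set u | [set v; u] \in F].

Lemma EF_le (F : {set {set V}}) (v : V) : F \subset edges adj ->
  #|[set e in F | v \in e]| <= #|nb F v|.
Proof.
move=> sF.
have : [set e in F | v \in e] \subset (fun u => [set v; u]) @: nb F v.
  apply/subsetP => e; rewrite inE => /andP[eF ve].
  case: (pairP sF eF ve) => u [_ _ E]; apply/imsetP; exists u => //.
  by rewrite inE -E.
move/subset_leq_card/leq_trans; apply; exact: leq_imset_card.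
Qed.

Lemma P1P2 (F : {set {set V}}) (a b c d f : V) : uniq [:: a; b; c; d; f] ->
  [set a; b] \in F -> [set c; d] \in F -> [set d; f] \in F -> has_P1uP2 F.
Proof.
move=> u h1 h2 h3; apply/existsP; exists a; apply/existsP; exists b;
apply/existsP; exists c; apply/existsP; exists d; apply/existsP; exists f.
by rewrite u h1 h2 h3.
Qed.

Lemma upper (F : {set {set V}}) : F \subset edges adj -> ~~ has_P1uP2 F -> 6 < #|F| ->
  #|F| <= maxn (maxdeg adj) (matching_number adj).
Proof.
move=> sF nP big.
have /set0Pn [e0 e0F] : F != set0 by rewrite -card_gt0; apply: leq_trans big.
case/edgesP: (subsetP sF _ e0F) => v0 _.
case: (@arg_maxnP V v0 predT (fun v => #|nb F v|) isT) => d _ dmax.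
have {}dmax : forall j, #|nb F j| <= #|nb F d| by move=> j; apply: dmax.
have [k1|k2] := leqP #|nb F d| 1.
  have mF : is_matching adj F.
    rewrite /is_matching sF /=; apply/forallP => e1; apply/implyP => e1F.
    apply/forallP => e2; apply/implyP => e2F; apply/implyP => ne.
    rewrite -setI_eq0; apply/negPn/negP => /set0Pn [v]; rewrite inE => /andP[v1 v2].
    case: (pairP sF e1F v1) => u1 [_ _ E1]; case: (pairP sF e2F v2) => u2 [_ _ E2].
    have : u1 != u2 by apply: contra ne => /eqP e; rewrite E1 E2 e.
    move=> nu.
    have : 1 < #|nb F v|.
      rewrite (cardsD1 u1) (cardsD1 u2 (nb F v :\ u1)).
      by rewrite !inE eq_sym nu -E1 -E2 e1F e2F.
    by move=> h; move: (leq_trans h (leq_trans (dmax v) k1)).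
  apply: leq_trans (leq_maxr _ _).
  exact: (@leq_bigmax_cond _ (is_matching adj) (fun M => #|M|) F mF).
case: (boolP [forall e in F, d \in e]) => [/forall_inP star | nstar].
  apply: leq_trans (leq_maxl _ _).
  have h1 : #|F| <= #|nb F d|.
    have -> : #|F| = #|[set e in F | d \in e]|.
      by apply: eq_card => e; rewrite inE; case eF: (e \in F) => //=; rewrite star.
    exact: EF_le.
  apply: (leq_trans h1); apply: leq_trans (leq_bigmax (F := deg adj) d).
  apply: subset_leq_card; apply/subsetP => u; rewrite !inE => uF.
  by apply: pair_adj; apply: (subsetP sF).
exfalso.
have L : forall e', e' \in F -> d \notin e' -> #|nb F d :\: e'| <= 1.
  move=> e' e'F de'; apply/card_le1_eqP => u w.
  rewrite !inE => /andP[ue uF] /andP[we wF].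
  apply/eqP; apply/negP => /negP nuw; suff : has_P1uP2 F by rewrite (negbTE nP).
  case: (edgesP (subsetP sF _ e'F)) => x [y [hxy E]].
  have hud : adj d u by apply: pair_adj; apply: (subsetP sF).
  have hwd : adj d w by apply: pair_adj; apply: (subsetP sF).
  have nxy : x != y by apply/eqP => exy; move: hxy; rewrite exy hi.
  have nud : u != d by apply/eqP => eu; move: hud; rewrite eu hi.
  have ndw : d != w by apply/eqP => ew; move: hwd; rewrite ew hi.
  apply: (@P1P2 F x y u d w); [ | by rewrite -E | by rewrite setUC | done].
  move: ue we de'; rewrite E !inE /= !negb_or => /andP[ux uy] /andP[wx wy] /andP[dx dy].
  by rewrite !(eq_sym x) !(eq_sym y) ux uy wx wy dx dy (eq_sym u w) nuw nxy nud ndw.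
have card2 : forall e', e' \in F -> #|e'| = 2.
  move=> e' e'F; case: (edgesP (subsetP sF _ e'F)) => x [y [hxy ->]].
  by rewrite cards2; case: eqP => // exy; move: hxy; rewrite exy hi.
case/forall_inPn: nstar => e eF de.
have kle3 : #|nb F d| <= 3.
  rewrite -(cardsID e (nb F d)).
  have h1 : #|nb F d :&: e| <= #|e| by apply: subset_leq_card; apply: subsetIr.
  move: (L e eF de) (card2 e eF) h1; lia.
set Ed := [set e' : {set V} | d \in e'].
have hF := cardsID Ed F.
have hI : #|F :&: Ed| <= #|nb F d|.
  apply: leq_trans (@EF_le F d sF); apply: subset_leq_card; apply/subsetP => e'.
  by rewrite !inE.
have inA : forall e', e' \in F :\: Ed -> e' \in F /\ d \notin e'.
  by move=> e'; rewrite !inE => /andP[-> ->].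
have [k3|k3] : #|nb F d| = 3 \/ #|nb F d| = 2 by lia.
  have hA : #|F :\: Ed| <= 3.
    rewrite -[3]/('C(3, 2)) -k3 -cards_draws; apply: subset_leq_card.
    apply/subsetP => e' /inA [e'F de']; rewrite inE card2 // andbT.
    have h1 := L e' e'F de'; have h2 := cardsID e' (nb F d).
    have h3 : #|nb F d :&: e'| <= #|e'| by apply: subset_leq_card; apply: subsetIr.
    have /eqP <- : nb F d :&: e' == e'.
      rewrite eqEcard subsetIr /=; move: h1 h2 h3 (card2 e' e'F); lia.
    exact: subsetIl.
  move: hF hI hA big; rewrite k3 => h1 h2 h3 h4; have := leq_add h2 h3; rewrite h1 => h5; by have := leq_trans h4 h5.
have /cards2P [a [b [nab Nd]]] : #|nb F d| == 2 by rewrite k3.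
set Ea := [set e' in F | a \in e'].
set Eb := [set e' in F | b \in e'].
have aN : a \in nb F d by rewrite Nd !inE eqxx.
have bN : b \in nb F d by rewrite Nd !inE eqxx orbT.
have hEu : forall u, u \in nb F d -> #|[set e' in F | u \in e'] :\ [set d; u]| <= 1.
  move=> u uN; move: (cardsD1 [set d; u] [set e' in F | u \in e']).
  have -> : [set d; u] \in [set e' in F | u \in e'].
    by move: uN; rewrite !inE eqxx orbT andbT.
  move: (@EF_le F u sF) (dmax u); rewrite k3 => h1 h2 h3; move: (leq_trans h1 h2); rewrite h3; by [].
have hA : #|F :\: Ed| <= 2.
  apply: (@leq_trans #|(Ea :\ [set d; a]) :|: (Eb :\ [set d; b])|).
    apply: subset_leq_card; apply/subsetP => e' /inA [e'F de'].
    have : (a \in e') || (b \in e').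
      apply/negPn/negP; rewrite negb_or => /andP[ae be].
      move: (L e' e'F de'); rewrite (cardsD1 a) (cardsD1 b (_ :\ a)) !inE.
      move: aN bN; rewrite !inE => -> ->; rewrite ae be (eq_sym b a) nab. by [].
    have nda : e' != [set d; a] by apply: contra de' => /eqP ->; rewrite !inE eqxx.
    have ndb : e' != [set d; b] by apply: contra de' => /eqP ->; rewrite !inE eqxx.
    by rewrite !inE nda ndb e'F /=.
  rewrite cardsU; apply: (leq_trans (leq_subr _ _)); exact: (leq_add (hEu a aN) (hEu b bN)).
move: hF hI hA big; rewrite k3 => h1 h2 h3 h4; have := leq_add h2 h3; rewrite h1 => h5; by have := leq_trans h4 h5.
Qed.

Lemma star_ok (x : V) : deg adj x <= ex_P1uP2 adj.
Proof.
set S := (fun y => [set x; y]) @: [set y | adj x y].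
have cS : #|S| = deg adj x.
  rewrite /deg card_in_imset // => y y' _ _; exact: pair_inj.
rewrite -cS /ex_P1uP2; apply: (leq_bigmax_cond (F := fun F : {set {set V}} => #|F|) S).
apply/andP; split.
  apply/subsetP => e /imsetP [y]; rewrite inE => hy ->; exact: mem_edges.
apply/negP => /existsP [a] /existsP [b] /existsP [c] /existsP [d] /existsP [f].
case/andP => u /and3P [] /imsetP [y1 _ E1] /imsetP [y2 _ E2] _.
have xa : x \in [set a; b] by rewrite E1 !inE eqxx.
have xc : x \in [set c; d] by rewrite E2 !inE eqxx.
move: u xa xc; rewrite !inE /= !negb_or.
move=> uu; case/orP=> /eqP ex; case/orP=> /eqP ex'; move: uu; rewrite -ex -ex' eqxx /= ?andbF // -?ex ?andbF //.
Qed.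

Lemma match_ok (M : {set {set V}}) : is_matching adj M -> #|M| <= ex_P1uP2 adj.
Proof.
move=> mM; rewrite /ex_P1uP2; apply: (leq_bigmax_cond (F := fun F : {set {set V}} => #|F|) M).
case/andP: (mM) => sM /forallP dM; rewrite sM /=.
apply/negP => /existsP [a] /existsP [b] /existsP [c] /existsP [d] /existsP [f].
case/andP => u /and3P [] _ h1 h2.
move: (dM [set c; d]); rewrite h1 /= => /forallP /(_ [set d; f]); rewrite h2 /=.
have -> : [set c; d] != [set d; f].
  apply/eqP => E; have : c \in [set d; f] by rewrite -E !inE eqxx.
  rewrite !inE => /orP [] /eqP ecx; move: u; rewrite ecx /= !inE eqxx /= ?orbT ?andbF //.
move=> /implyP /(_ isT) /disjointFr /(_ (_ : d \in [set c; d])).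
by rewrite !inE eqxx orbT => /(_ isT).
Qed.

End Aux.

Theorem corollary3p18 (V : finType) (adj : rel V) :
  symmetric adj -> irreflexive adj ->
  6 <= maxn (maxdeg adj) (matching_number adj) ->
  ex_P1uP2 adj = maxn (maxdeg adj) (matching_number adj).
Proof.
move=> hs hi h6; apply/eqP; rewrite eqn_leq; apply/andP; split.
  apply/bigmax_leqP => F /andP [sF nP].
  case: (leqP #|F| 6) => [le6|gt6]; first exact: leq_trans le6 h6.
  exact: upper.
rewrite geq_max; apply/andP; split.
  apply/bigmax_leqP => x _; exact: star_ok.
apply/bigmax_leqP => M mM; exact: match_ok.
Qed.
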